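(* Consider the network and loss from the context with $\alpha^-=0$. Let $\overline{\mathbf{P}}$ be a stationary point of the loss of the network with hidden neurons $I$. Let $\overline{\mathbf{P}}'$ be obtained by adding a finite set $I^-$ of new hidden neurons $i^-$ with input weights $\mathbf{w}_{i^-}$ satisfying $\mathbf{w}_{i^-}\cdot\mathbf{x}_k<0$ for all $k\in K$ and arbitrary output weights $h_{ji^-}$ ($j\in J$), all other parameters unchanged. Then $\overline{\mathbf{P}}'$ is a stationary point of the loss of the widened network (with hidden neurons $I\cup I^-$).
   Context: Fix an integer $d>1$, finite index sets $I$ (hidden), $J$ (output), $K$ (samples), reals $\alpha^+\ne\alpha^-$, and $\rho(z)=\alpha^+z$ for $z\ge0$, $\rho(z)=\alpha^-z$ for $z<0$. For a network with finite hidden index set $\tilde I$, parameters $\mathbf{P}$ consist of $\mathbf{w}_i\in\mathbb{R}^d$ and $h_{ji}\in\mathbb{R}$ ($i\in\tilde I$, $j\in J$), output $\hat{\mathbf{y}}(\mathbf{P};\mathbf{x})_j=\sum_{i\in\tilde I}h_{ji}\rho(\mathbf{w}_i\cdot\mathbf{x})$, and loss $\mathcal{L}(\mathbf{P})=\frac12\sum_{k\in K}\|\hat{\mathbf{y}}(\mathbf{P};\mathbf{x}_k)-\mathbf{y}_k\|^2$ for training data $(\mathbf{x}_k,\mathbf{y}_k)_{k\in K}$. A point $\overline{\mathbf{P}}$ is a stationary point if $\lim_{\alpha\to0^+}\frac{\mathcal{L}(\overline{\mathbf{P}}+\alpha\mathbf{d})-\mathcal{L}(\overline{\mathbf{P}})}{\alpha}\ge0$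 for all directions $\mathbf{d}$ in parameter space. *)

(* Defs.v *)
From HB Require Import structures.
From mathcomp Require Import all_boot all_order all_algebra.
From mathcomp Require Import all_classical all_reals.
From mathcomp Require Import topology normedtype.
Set Implicit Arguments. Unset Strict Implicit. Unset Printing Implicit Defensive.
Import Order.TTheory GRing.Theory Num.Theory.
Import numFieldNormedType.Exports.
Local Open Scope ring_scope.
Local Open Scope classical_set_scope.

Section Net.
Variable R : realType.

Definition rho (ap am z : R) : R := if 0 <= z then ap * z else am * z.

Definition dotv (d : nat) (u v : 'rV[R]_d) : R := \sum_(i < d) u ord0 i * v ord0 i.

Record params (Ih J : finType) (d : nat) := Params {
  pw : Ih -> 'rV[R]_d ;
  ph : J -> Ih -> R
}.

Definition padd (Ih J : finType) (d : nat) (P : params Ih J d) (a : R)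
  (D : params Ih J d) : params Ih J d :=
  Params (fun i => pw P i + a *: pw D i) (fun j i => ph P j i + a * ph D j i).

Definition yhat (ap am : R) (Ih J : finType) (d : nat) (P : params Ih J d)
  (x : 'rV[R]_d) (j : J) : R :=
  \sum_(i : Ih) ph P j i * rho ap am (dotv (pw P i) x).

Definition loss (ap am : R) (Ih J K : finType) (d : nat)
  (xs : K -> 'rV[R]_d) (ys : K -> J -> R) (P : params Ih J d) : R :=
  2^-1 * \sum_(k : K) \sum_(j : J) (yhat ap am P (xs k) j - ys k j) ^+ 2.

Definition stationary (ap am : R) (Ih J K : finType) (d : nat)
  (xs : K -> 'rV[R]_d) (ys : K -> J -> R) (P : params Ih J d) : Prop :=
  forall D : params Ih J d, exists l : R,
    ((fun a : R => (loss ap am xs ys (padd P a D) - loss ap am xs ys P) / a)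
       @ 0^'+ --> l) /\ 0 <= l.

Definition widen (Ih Im J : finType) (d : nat) (P : params Ih J d)
  (wm : Im -> 'rV[R]_d) (hm : J -> Im -> R) : params (Ih + Im)%type J d :=
  Params (fun i => match i with inl i => pw P i | inr i => wm i end)
         (fun j i => match i with inl i => ph P j i | inr i => hm j i end).

End Net.

(* Main.v *)
Require Import Defs.
From HB Require Import structures.
From mathcomp Require Import all_boot all_order all_algebra.
From mathcomp Require Import all_classical all_reals.
From mathcomp Require Import topology normedtype.
From mathcomp Require Import lra.
Import Order.TTheory GRing.Theory Num.Theory.
Import numFieldNormedType.Exports.
Local Open Scope ring_scope.
Local Open Scope classical_set_scope.

Lemma dotvDZ (R : realType) d (u v x : 'rV[R]_d) (a : R) :
  dotv (u + a *: v) x = dotv u x + a * dotv v x.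
Proof.
rewrite /dotv mulr_sumr -big_split /=; apply: eq_bigr => i _.
by rewrite !mxE mulrDl mulrA.
Qed.

Lemma near_neg (R : realType) (c b : R) : c < 0 ->
  \forall a \near (0:R)^'+, c + a * b < 0.
Proof.
move=> hc.
have he : 0 < - c / (`|b| + 1) by apply: divr_gt0; rewrite ?oppr_gt0 // ltr_pwDr // normr_ge0.
near=> a.
have ha : 0 < a by near: a; exact: nbhs_right_gt.
have hae : a < - c / (`|b| + 1) by near: a; exact: nbhs_right_lt.
have h1 : a * b <= a * `|b| by rewrite ler_pM2l // real_ler_norm // num_real.
have h2 : a * (`|b| + 1) < - c.
  by rewrite -ltr_pdivlMr ?ltr_pwDr ?normr_ge0.
have h3 : 0 <= a * `|b| by rewrite mulr_ge0 // ltW.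
rewrite mulrDr mulr1 in h2.
lra.
Unshelve. all: by end_near.
Qed.

Theorem proposition5 (R : realType) (d : nat) (hd : (1 < d)%N)
  (I J K Im : finType) (ap am : R) (hap : ap != am) (ham : am = 0)
  (xs : K -> 'rV[R]_d) (ys : K -> J -> R) (P : params R I J d)
  (hP : stationary ap am xs ys P)
  (wm : Im -> 'rV[R]_d) (hm : J -> Im -> R)
  (hwm : forall (i : Im) (k : K), dotv (wm i) (xs k) < 0) :
  stationary ap am xs ys (widen P wm hm).
Proof.
move=> D.
pose DI : params R I J d := Params (fun i => pw D (inl i)) (fun j i => ph D j (inl i)).
case: (hP DI) => l [hl l0].
exists l; split => //.
have rho0 : forall z : R, z < 0 -> rho ap am z = 0.
  by move=> z hz; rewrite /rho ham mul0r leNgt hz.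
have Lw : loss ap am xs ys (widen P wm hm) = loss ap am xs ys P.
  rewrite /loss; congr (_ * _); apply: eq_bigr => k _; apply: eq_bigr => j _.
  congr (_ ^+ 2); congr (_ - _); rewrite /yhat big_sumType /= [X in _ + X]big1 ?addr0 //.
  by move=> i _; rewrite rho0 ?mulr0.
have hnear : \forall a \near (0:R)^'+, forall ik : Im * K,
    dotv (wm ik.1 + a *: pw D (inr ik.1)) (xs ik.2) < 0.
  apply: filter_forall => -[i k] /=.
  move: (@near_neg R _ (dotv (pw D (inr i)) (xs k)) (hwm i k)).
  by apply: filterS => a /=; rewrite dotvDZ.
apply: cvg_trans hl; apply: near_eq_cvg.
apply: filterS hnear => a ha /=.
rewrite Lw; congr ((_ - _) / _).
symmetry; rewrite /loss; congr (_ * _); apply: eq_bigr => k _; apply: eq_bigr => j _.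
congr (_ ^+ 2); congr (_ - _); rewrite /yhat big_sumType /= [X in _ + X]big1 ?addr0 //.
move=> i _; rewrite rho0; first by rewrite mulr0.
by move: (ha (i, k)).
Qed.
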